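(* Let $\mathcal A$ be a Banach algebra and $\mathcal A^\sharp=\mathcal A\oplus\mathbb C$ its unitization. If $\mathcal A^\sharp$ is semiweakly amenable, then $\mathcal A$ is semiweakly amenable.
   Context: The unitization $\mathcal A^\sharp$ is $\mathcal A\oplus\mathbb C$ with product $(a,c)(b,c')=(ab+cb+c'a,cc')$. For a Banach algebra $\mathcal A$, $\mathcal A^*$ is the dual $\mathcal A$-bimodule ($\langle x,a\cdot f\rangle=\langle xa,f\rangle$, $\langle x,f\cdot a\rangle=\langle ax,f\rangle$). A derivation $D:\mathcal A\to X$ is a bounded linear map with $D(ab)=D(a)\cdot b+a\cdot D(b)$; it is inner if $D(a)=a\cdot x-x\cdot a$ for some $x\in X$. $\mathcal A$ is semiweakly amenable if every derivation $D:\mathcal A\to\mathcal A^*$ with $\langle D(a),b\rangle+\langle D(b),a\rangle=0$ for all $a,b\in\mathcal A$ is inner. *)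

(* Defs.v *)
From HB Require Import structures.
From mathcomp Require Import all_boot all_order all_algebra.
From mathcomp Require Import all_classical all_reals all_analysis.
From mathcomp Require Export complex.
Export numFieldNormedType.Exports.
Import Order.TTheory GRing.Theory Num.Theory.

Set Implicit Arguments.
Unset Strict Implicit.
Unset Printing Implicit Defensive.

Local Open Scope ring_scope.

Section Defs.
Variables (K : numFieldType) (T : lmodType K).
Variables (mul : T -> T -> T) (nrm : T -> K).

Definition dual_elem (f : T -> K) : Prop :=
  (forall (c : K) (x y : T), f (c *: x + y) = c * f x + f y) /\
  (exists M : K, forall x, `|f x| <= M * nrm x).

(* D : T -> T^*, encoded as D a x = <x, D(a)>.  D is a (bounded) derivation
   into the dual bimodule, where <x, a.f> = <x a, f> and <x, f.a> = <a x, f>. *)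
Definition dual_derivation (D : T -> T -> K) : Prop :=
  (forall (c : K) (a b x : T), D (c *: a + b) x = c * D a x + D b x) /\
  (forall a, dual_elem (D a)) /\
  (exists M : K, forall a x, `|D a x| <= M * nrm a * nrm x) /\
  (forall a b x, D (mul a b) x = D a (mul b x) + D b (mul x a)).

Definition inner_dual_derivation (D : T -> T -> K) : Prop :=
  exists f : T -> K, dual_elem f /\
    forall a x, D a x = f (mul x a) - f (mul a x).

Definition semiweakly_amenable : Prop :=
  forall D : T -> T -> K, dual_derivation D ->
    (forall a b, D a b + D b a = 0) -> inner_dual_derivation D.
End Defs.

Definition banach_algebra (K : numFieldType) (V : completeNormedModType K)
  (mul : V -> V -> V) : Prop :=
  (forall (c : K) (a b x : V), mul (c *: a + b) x = c *: mul a x + mul b x) /\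
  (forall (c : K) (a b x : V), mul x (c *: a + b) = c *: mul x a + mul x b) /\
  (forall a b x : V, mul (mul a b) x = mul a (mul b x)) /\
  (forall a b : V, `|mul a b| <= `|a| * `|b|).

Definition unit_mul (K : numFieldType) (V : normedModType K)
  (mul : V -> V -> V) (p q : (V * K)%type) : (V * K)%type :=
  (mul p.1 q.1 + p.2 *: q.1 + q.2 *: p.1, p.2 * q.2).

Definition unit_norm (K : numFieldType) (V : normedModType K)
  (p : (V * K)%type) : K := `|p.1| + `|p.2|.

(* Main.v *)
Require Import Defs.
From mathcomp Require Import all_boot all_order all_algebra.
From mathcomp Require Import all_classical all_reals all_analysis.
From mathcomp Require Import complex.
From mathcomp Require Import ring.
Import Order.TTheory GRing.Theory Num.Theory.
Local Open Scope ring_scope.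
Local Open Scope complex_scope.

Section Helpers.
Variables (K : numFieldType) (T : lmodType K).
Lemma lin_add (f : T -> K) : (forall c x y, f (c *: x + y) = c * f x + f y) ->
  forall x y, f (x + y) = f x + f y.
Proof. by move=> H x y; have := H 1 x y; rewrite scale1r mul1r. Qed.
Lemma lin_0 (f : T -> K) : (forall c x y, f (c *: x + y) = c * f x + f y) ->
  f 0 = 0.
Proof.
move=> H; have := H 1 0 0; rewrite scale1r addr0 mul1r => /eqP.
by rewrite -subr_eq subrr eq_sym => /eqP.
Qed.
Lemma lin_scale (f : T -> K) : (forall c x y, f (c *: x + y) = c * f x + f y) ->
  forall c x, f (c *: x) = c * f x.
Proof. by move=> H c x; have := H c x 0; rewrite addr0 (lin_0 f H) addr0. Qed.
End Helpers.


Lemma bnd1 (K : numFieldType) (u M n m : K) :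
  `|u| <= M * n -> 0 <= n -> 0 <= m -> `|u| <= `|M| * (n + m).
Proof.
move=> H n0 m0.
have e : M * n = `|M| * n.
  have h0 : 0 <= M * n := le_trans (normr_ge0 u) H.
  by rewrite -(ger0_norm h0) normrM (ger0_norm n0).
rewrite e in H; apply: (le_trans H); apply: ler_wpM2l; first exact: normr_ge0.
by rewrite lerDl.
Qed.

Lemma bnd2 (K : numFieldType) (u M n m n' m' : K) :
  `|u| <= M * n * m -> 0 <= n -> 0 <= m -> 0 <= n' -> 0 <= m' ->
  `|u| <= `|M| * (n + n') * (m + m').
Proof.
move=> H n0 m0 n0' m0'.
have e : M * n * m = `|M| * n * m.
  have h0 : 0 <= M * n * m := le_trans (normr_ge0 u) H.
  by rewrite -(ger0_norm h0) !normrM (ger0_norm n0) (ger0_norm m0).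
rewrite e in H; apply: (le_trans H); rewrite -!mulrA.
apply: ler_wpM2l; first exact: normr_ge0.
apply: ler_pM => //; by rewrite lerDl.
Qed.

Theorem theorem3p8 (R : realType) (A : completeNormedModType R[i])
  (mul : A -> A -> A) :
  banach_algebra mul ->
  semiweakly_amenable (T := (A * R[i])%type) (unit_mul mul) (@unit_norm _ A) ->
  semiweakly_amenable mul (fun a : A => `|a|).
Proof.
move=> [mlinl [mlinr [massoc mnorm]]] Hs D [Dlin [Ddual [[M HM] Dder]]] Dskew.
pose Ds := fun p q : (A * R[i])%type => D p.1 q.1.
have DA : forall a b x, D (a + b) x = D a x + D b x.
  by move=> a b x; have := Dlin 1 a b x; rewrite scale1r mul1r.
have DZ : forall c a x, D (c *: a) x = c * D a x.
  move=> c a x; have := Dlin c a 0 x; rewrite addr0 => ->.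
  by rewrite (lin_0 _ _ (fun a => D a x) (fun c a b => Dlin c a b x)) addr0.
have XA : forall a x y, D a (x + y) = D a x + D a y.
  by move=> a; case: (Ddual a) => Dl _; exact: lin_add _ _ _ Dl.
have XZ : forall a c x, D a (c *: x) = c * D a x.
  by move=> a; case: (Ddual a) => Dl _; exact: lin_scale _ _ _ Dl.
have [] := Hs Ds.
- split; last split; last split.
  + by move=> c a b x; rewrite /Ds /= Dlin.
  + move=> p; case: (Ddual p.1) => [Dl [Ma HMa]]; split.
      by move=> c x y; rewrite /Ds /=; exact: Dl.
    exists `|Ma| => x; rewrite /Ds /unit_norm.
    by apply: bnd1; [exact: HMa|exact: normr_ge0|exact: normr_ge0].
  + exists `|M| => a x; rewrite /Ds /unit_norm.
    by apply: bnd2; [exact: HM|exact: normr_ge0|exact: normr_ge0|exact: normr_ge0|exact: normr_ge0].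
  + move=> [a1 a2] [b1 b2] [x1 x2]; rewrite /Ds /unit_mul /=.
    rewrite !DA !DZ !XA !XZ Dder.
    have := Dskew a1 b1; move/eqP; rewrite addr_eq0 => /eqP ->.
    rewrite mulrN. ring.
- by move=> a b; exact: Dskew.
move=> fs [[fslin [Ms HMs]] fsinner].
exists (fun x => fs (x, 0)); split.
- split.
  + move=> c x y.
    have -> : ((c *: x + y, 0) : (A * R[i])%type) = c *: (x, 0) + (y, 0).
      apply: injective_projections => /=; [by [] | by rewrite scaler0 addr0].
    exact: fslin.
  + exists Ms => x; have := HMs (x, 0); by rewrite /unit_norm /= normr0 addr0.
- move=> a x; have := fsinner (a, 0) (x, 0).
  by rewrite /unit_mul /= !scale0r !addr0 mulr0.
Qed.
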